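(* For every set of reals $X$, the following are equivalent: (a) $X$ satisfies $\mathrm{Split}(\mathrm T,\mathrm T)$; (b) $X$ satisfies $\mathrm{Split}(\mathrm T,\Omega)$; (c) $X$ satisfies $\mathrm{Split}(\mathrm T,\Lambda)$.
   Context: A set of reals is an infinite topological space homeomorphic to a subset of $\mathbb R$. A cover of a space $X$ is a family $\mathcal U$ of subsets of $X$ with $\bigcup\mathcal U=X$ such that $X\not\subseteq U$ for every $U\in\mathcal U$. A cover $\mathcal U$ is: a large cover if every $x\in X$ lies in infinitely many members of $\mathcal U$; an $\omega$-cover if every finite subset of $X$ is contained in some member of $\mathcal U$; a $\tau$-cover if it is a large cover and for all $x,y\in X$ at least one of $\{U\in\mathcal U: x\in U, y\notin U\}$, $\{U\in\mathcal U: y\in U, x\notin U\}$ is finite. $\Lambda,\Omega,\mathrm T$ denote the collections of open large covers, open $\omega$-covers and open $\tau$-covers of $X$. For collections $\mathfrak U,\mathfrak V$ of covers of $X$, $X$ satisfies $\mathrm{Split}(\mathfrak U,\mathfrak V)$ if every $\mathcal U\in\mathfrak U$ can be partitioned into two disjoint subfamilies $\mathcal V,\mathcal W$ each of which contains a subfamily belonging to $\mathfrak V$. *)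

(* Defs.v *)
From HB Require Import structures.
From mathcomp Require Import all_boot all_order all_algebra.
From mathcomp Require Import all_classical all_reals topology normedtype.
Set Implicit Arguments. Unset Strict Implicit. Unset Printing Implicit Defensive.
Import Order.TTheory GRing.Theory Num.Theory numFieldTopology.Exports.
Local Open Scope classical_set_scope.

Section Covers.
Variable R : realType.

Definition relopen (X U : set R) : Prop := exists V : set R, open V /\ U = V `&` X.

Definition is_cover (X : set R) (U : set (set R)) : Prop :=
  (forall A, U A -> A `<=` X) /\
  (forall x, X x -> exists A, U A /\ A x) /\
  (forall A, U A -> ~ (X `<=` A)).

Definition open_cover (X : set R) (U : set (set R)) : Prop :=
  is_cover X U /\ (forall A, U A -> relopen X A).

Definition large_cover (X : set R) (U : set (set R)) : Prop :=
  forall x, X x -> ~ finite_set [set A | U A /\ A x].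

Definition omega_cover (X : set R) (U : set (set R)) : Prop :=
  forall F : set R, finite_set F -> F `<=` X -> exists A, U A /\ F `<=` A.

Definition tau_cover (X : set R) (U : set (set R)) : Prop :=
  large_cover X U /\
  forall x y, X x -> X y ->
    finite_set [set A | U A /\ A x /\ ~ A y] \/
    finite_set [set A | U A /\ A y /\ ~ A x].

Definition Lambda (X : set R) : set (set (set R)) :=
  [set U | open_cover X U /\ large_cover X U].
Definition Omega (X : set R) : set (set (set R)) :=
  [set U | open_cover X U /\ omega_cover X U].
Definition Tau (X : set R) : set (set (set R)) :=
  [set U | open_cover X U /\ tau_cover X U].

Definition SplitCov (UU VV : set (set (set R))) : Prop :=
  forall U, UU U -> exists V W : set (set R),
    V `&` W = set0 /\ V `|` W = U /\
    (exists V', V' `<=` V /\ VV V') /\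
    (exists W', W' `<=` W /\ VV W').

End Covers.

(* Main.v *)
Require Import Defs.
From mathcomp Require Import all_boot all_classical all_reals topology normedtype.
Local Open Scope classical_set_scope.

Section Aux.
Variable R : realType.
Implicit Types (X : set R) (U V : set (set R)).

Lemma omega_lambda X U : Omega X U -> Lambda X U.
Proof.
move=> [oc om]; split => // x Xx finS.
have [[subX [cov noX]] _] := oc.
have fP : forall A : set R, exists y, U A /\ A x -> X y /\ ~ A y.
  move=> A; case: (pselect (U A /\ A x)) => [[UA Ax]|nS].
    have := noX A UA; move/boolp.existsNP => [y /boolp.not_implyP [Xy nAy]].
    by exists y.
  by exists x.
have [f hf] := boolp.choice fP.
set S := [set A | U A /\ A x] in finS.
have finF : finite_set (x |` (f @` S)).
  by rewrite finite_setU; split; [exact: finite_set1|exact: finite_image].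
have FX : x |` (f @` S) `<=` X.
  by move=> z [->//|[A SA <-]]; have [] := hf A SA.
have [B [UB FB]] := om _ finF FX.
have SB : S B by split => //; apply: FB; left.
have [_] := hf B SB; apply; apply: FB; right; by exists B.
Qed.

Lemma tau_sub X U V : Tau X U -> V `<=` U -> Lambda X V -> Tau X V.
Proof.
move=> [[[subX [cov noX]] ro] [lg ta]] VU [_ lV].
split; [split; [split; [|split]|]|split] => //.
- by move=> A /VU; apply: subX.
- move=> x Xx; have /infinite_setN0 [A [VA Ax]] := lV x Xx.
  by exists A.
- by move=> A /VU; apply: noX.
- by move=> A /VU; apply: ro.
- move=> x y Xx Xy; case: (ta x y Xx Xy) => h; [left|right];
    by apply: sub_finite_set h => A [/VU].
Qed.

Lemma tau_omega X U : X !=set0 -> Tau X U -> Omega X U.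
Proof.
move=> [x0 Xx0] [oc [lg ta]]; split => // F finF FX.
have [[subX [cov noX]] _] := oc.
have [s Fs] := (finite_seqP F).1 finF; subst F.
pose S x y := [set A | U A /\ A x /\ ~ A y].
have Strans : forall x y z, S x z `<=` S x y `|` S y z.
  move=> x y z A [UA [Ax nAz]]; case: (pselect (A y)) => Ay.
    by right. by left.
have Srefl : forall x, finite_set (S x x).
  by move=> x; apply: sub_finite_set (finite_set0 _) => A [_ []].
have minP : forall t : seq R, [set` t] `<=` X ->
    t = [::] \/ exists x, x \in t /\ forall y, y \in t -> finite_set (S x y).
  elim=> [|a t IH] tX; first by left.
  right.
  have tX' : [set` t] `<=` X by move=> z /= zt; apply: tX; rewrite /= inE zt orbT.
  have Xa : X a by apply: tX; rewrite /= inE eqxx.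
  case: (IH tX') => [->|[x [xt hx]]].
    by exists a; split; [rewrite inE eqxx|move=> y; rewrite mem_seq1 => /eqP ->].
  have Xx : X x by apply: tX'.
  case: (ta x a Xx Xa) => hxa.
    exists x; split; first by rewrite inE xt orbT.
    by move=> y; rewrite inE => /orP[/eqP ->|]; [|apply: hx].
  exists a; split; first by rewrite inE eqxx.
  move=> y; rewrite inE => /orP[/eqP ->|yt]; first exact: Srefl.
  apply: sub_finite_set (Strans a x y) _.
  by rewrite finite_setU; split => //; apply: hx.
case: (minP s FX) => [->|[x [xs hx]]].
  have [A [UA _]] := cov x0 Xx0.
  by exists A; split => // z /=; rewrite in_nil.
have finB : forall t : seq R, (forall y, y \in t -> finite_set (S x y)) ->
    finite_set [set A | U A /\ A x /\ exists y, y \in t /\ ~ A y].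
  elim=> [|a t IH] ht.
    by apply: sub_finite_set (finite_set0 _) => A [_ [_ [y]]]; rewrite in_nil => -[].
  apply: sub_finite_set (_ : _ `<=` S x a `|` [set A | U A /\ A x /\ exists y, y \in t /\ ~ A y]) _.
    move=> A [UA [Ax [y]]]; rewrite inE => -[/orP[/eqP ->|yt] nAy].
      by left.
    by right; split => //; split => //; exists y.
  rewrite finite_setU; split; first by apply: ht; rewrite inE eqxx.
  by apply: IH => y yt; apply: ht; rewrite inE yt orbT.
have Xx : X x by apply: FX.
have /infinite_setN0 [A [[UA Ax] nB]] :=
  infinite_setD (lg x Xx) (finB s hx).
exists A; split => // y ys; apply: contrapT => nAy.
by apply: nB; split => //; split => //; exists y.
Qed.

Lemma split_mono UU VV VV' : 
  (forall U V', UU U -> V' `<=` U -> VV V' -> VV' V') ->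
  SplitCov UU VV -> SplitCov UU VV'.
Proof.
move=> h sp U UUU; have [V [W [VW0 [VWU [[V' [V'V VVV']] [W' [W'W VVW']]]]]]] := sp U UUU.
have VsU : V `<=` U by rewrite -VWU; apply: subsetUl.
have WsU : W `<=` U by rewrite -VWU; apply: subsetUr.
exists V, W; split => //; split => //; split.
  by exists V'; split => //; apply: h UUU _ VVV'; apply: subset_trans V'V VsU.
by exists W'; split => //; apply: h UUU _ VVW'; apply: subset_trans W'W WsU.
Qed.

End Aux.

Theorem theorem2p1 (R : realType) (X : set R) (Xinf : ~ finite_set X) :
  (SplitCov (Tau X) (Tau X) <-> SplitCov (Tau X) (Omega X)) /\
  (SplitCov (Tau X) (Omega X) <-> SplitCov (Tau X) (Lambda X)).
Proof.
have X0 : X !=set0 by apply: infinite_setN0.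
have TO := @tau_omega R X _ X0.
have OL := @omega_lambda R X.
have TL : forall U, Tau X U -> Lambda X U.
  by move=> U TU; apply: OL; apply: TO.
have LT : forall U V', Tau X U -> V' `<=` U -> Lambda X V' -> Tau X V'.
  by move=> U V' TU VU LV; apply: tau_sub TU VU LV.
split; split.
- apply: (@split_mono R (Tau X) (Tau X) (Omega X)) => U V' TU VU TV.
  exact: TO.
- apply: (@split_mono R (Tau X) (Omega X) (Tau X)) => U V' TU VU OV.
  exact: (LT U V' TU VU (OL V' OV)).
- apply: (@split_mono R (Tau X) (Omega X) (Lambda X)) => U V' TU VU OV.
  exact: OL.
- apply: (@split_mono R (Tau X) (Lambda X) (Omega X)) => U V' TU VU LV.
  exact: (TO V' (LT U V' TU VU LV)).
Qed.
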